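(* For every Lie–Leibniz triple $(\mathfrak g,V,\Theta)$, the Lie superalgebra $L=L(\mathfrak g,V,\Theta)$ is $(-2,2)$-transitive.
   Context: Ground field $\mathbb{K}=\mathbb{R}$ or $\mathbb{C}$; all spaces $\mathbb{Z}$-graded with parity equal to degree mod 2; subalgebras and ideals are graded. $G_\pm=\bigoplus_{k\ge1}G_{\pm k}$, $G_{m-}=\bigoplus_{k\le m}G_k$, $G_{n+}=\bigoplus_{k\ge n}G_k$. A Lie superalgebra $G$ is $(m,n)$-transitive if for $x\in G_{n+}$, $[G_-,x]=0$ implies $x=0$, and for $x\in G_{m-}$, $[G_+,x]=0$ implies $x=0$. A Lie–Leibniz triple $(\mathfrak g,V,\Theta)$ consists of a Lie algebra $\mathfrak g$, a $\mathfrak g$-module $V$ (action $x\cdot u$) and a linear map $\Theta:V\to\mathfrak g$ with $\Theta(\Theta(u)\cdot v)=[\Theta(u),\Theta(v)]$ for all $u,v$. Construction of $\mathbb U$: $\mathbb U_0=\mathfrak g$, $\mathbb U_1=V[-1]$ ($V$ in degree 1, odd), $\mathbb U_{-p+1}=\mathrm{Hom}(\mathbb U_1,\mathbb U_{-p+2})$ for $p\ge2$; brackets on $\mathbb U_{1-}$: Lie bracket on $\mathfrak g$, and recursively $[x,u]=x(u)$, $[u,x]=-(-1)^{|x|}x(u)$, $[x,y](u)=[x,y(u)]+(-1)^{|y|}[x(u),y]$ for $x,y\in\mathbb U_{0-}$, $u\in\mathbb U_1$, where $x(u)=x\cdot u$ for $x\in\mathfrak g$; $\mathbb U$ is the unique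 Lie superalgebra extending this semilocal Lie superalgebra with $\mathbb U_+$ free on $\mathbb U_1$. $\Theta$ is regarded as an element of $\mathbb U_{-1}$; $R_\Theta\subseteq\mathbb U_{-1}$ is the $\mathfrak g$-submodule generated by $\Theta$ under $x\cdot\phi=[x,\phi]$. Let $\sigma:\mathbb U_2\to\mathbb U_1$ be linear with $\sigma([u,v])=\tfrac12(\Theta(u)\cdot v+\Theta(v)\cdot u)$, and $K$ the sum of all $\mathfrak g$-submodules of $\mathbb U_2$ contained in $\ker\sigma$. Construction of $L$: let $\mathbb S$ be the subalgebra of $\mathbb U$ generated by $R_\Theta\oplus\mathfrak g\oplus\mathbb U_1$; let $\mathscr K$ be the ideal of $\mathbb S$ generated by $K$ (it is contained in $\mathbb U_{2+}$); $\mathbb T=\mathbb S/\mathscr K$; and $L(\mathfrak g,V,\Theta)=\mathbb T/J$, where $J$ is the sum of all ideals of $\mathbb T$ contained in $\mathbb T_{3+}$. *)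

(* Defs.v *)
From HB Require Import structures.
From mathcomp Require Import all_boot all_order all_algebra.
From mathcomp Require Export reals complex.
Set Implicit Arguments.
Unset Strict Implicit.
Unset Printing Implicit Defensive.
Import Order.TTheory GRing.Theory Num.Theory.
Local Open Scope ring_scope.

Section LieLeibniz.
Variable K : fieldType.

Definition is_lin (A B : lmodType K) (f : A -> B) : Prop :=
  forall (a : K) x y, f (a *: x + y) = a *: f x + f y.

Definition is_bilin (A B C : lmodType K) (f : A -> B -> C) : Prop :=
  (forall (a : K) x x' y, f (a *: x + x') y = a *: f x y + f x' y) /\
  (forall (a : K) x y y', f x (a *: y + y') = a *: f x y + f x y').

Definition is_subspace (A : lmodType K) (P : A -> Prop) : Prop :=
  P 0 /\ forall (a : K) x y, P x -> P y -> P (a *: x + y).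

Definition lie_algebra (g : lmodType K) (bg : g -> g -> g) : Prop :=
  is_bilin bg /\ (forall x, bg x x = 0) /\
  (forall x y z, bg x (bg y z) + bg y (bg z x) + bg z (bg x y) = 0).

Definition lie_module (g : lmodType K) (bg : g -> g -> g)
    (V : lmodType K) (act : g -> V -> V) : Prop :=
  is_bilin act /\
  (forall x y v, act (bg x y) v = act x (act y v) - act y (act x v)).

Definition lie_leibniz_triple (g : lmodType K) (bg : g -> g -> g)
    (V : lmodType K) (act : g -> V -> V) (Th : V -> g) : Prop :=
  [/\ lie_algebra bg, lie_module bg act, is_lin Th &
      forall u v, Th (act (Th u) v) = bg (Th u) (Th v)].

(* A Z-graded Lie superalgebra is a vector space U with a family of
   subspaces Ug k (the homogeneous component of degree k), U being their
   direct sum, and a bilinear bracket satisfying the graded super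
   antisymmetry and super Jacobi identity, parity being degree mod 2. *)
Definition psign (i j : int) : K :=
  if odd `|i|%N && odd `|j|%N then -1 else 1.

Record graded_lie_super (U : lmodType K) (Ug : int -> U -> Prop)
    (br : U -> U -> U) : Prop := {
  gls_sub : forall k, is_subspace (Ug k);
  gls_span : forall x, exists s : seq (int * U),
      (forall p, p \in s -> Ug p.1 p.2) /\ x = \sum_(p <- s) p.2;
  gls_indep : forall (s : seq int) (f : int -> U), uniq s ->
      (forall k, k \in s -> Ug k (f k)) -> \sum_(k <- s) f k = 0 ->
      forall k, k \in s -> f k = 0;
  gls_bilin : is_bilin br;
  gls_deg : forall i j x y, Ug i x -> Ug j y -> Ug (i + j) (br x y);
  gls_anti : forall i j x y, Ug i x -> Ug j y ->
      br x y = - (psign i j *: br y x);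
  gls_jacobi : forall i j x y z, Ug i x -> Ug j y ->
      br x (br y z) = br (br x y) z + psign i j *: br y (br x z)
}.

Section Graded.
Variables (U : lmodType K) (Ug : int -> U -> Prop) (br : U -> U -> U).

Definition Ugeq (n : int) (x : U) : Prop :=
  exists s : seq (int * U),
    (forall p, p \in s -> n <= p.1 /\ Ug p.1 p.2) /\ x = \sum_(p <- s) p.2.
Definition Uleq (m : int) (x : U) : Prop :=
  exists s : seq (int * U),
    (forall p, p \in s -> p.1 <= m /\ Ug p.1 p.2) /\ x = \sum_(p <- s) p.2.

Definition is_graded (P : U -> Prop) : Prop :=
  forall x, P x -> exists s : seq (int * U),
    (forall p, p \in s -> Ug p.1 p.2 /\ P p.2) /\ x = \sum_(p <- s) p.2.

Definition is_subalgebra (P : U -> Prop) : Prop :=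
  [/\ is_subspace P, is_graded P & forall x y, P x -> P y -> P (br x y)].

Definition gen_subalg (G : U -> Prop) (x : U) : Prop :=
  forall P, is_subalgebra P -> (forall y, G y -> P y) -> P x.

Definition is_ideal_of (A I : U -> Prop) : Prop :=
  [/\ is_subspace I, is_graded I, (forall x, I x -> A x) &
      forall x y, A x -> I y -> I (br x y) /\ I (br y x)].

Definition gen_ideal (A G : U -> Prop) (x : U) : Prop :=
  forall I, is_ideal_of A I -> (forall y, G y -> I y) -> I x.

Definition sum_of_family (F : (U -> Prop) -> Prop) (x : U) : Prop :=
  exists s : seq U, (forall y, y \in s -> exists W, F W /\ W y) /\
                    x = \sum_(y <- s) y.

(* The quotient Lie superalgebra A / Z (A a graded subalgebra of U, Z a
   graded ideal of A) is (m,n)-transitive.  Elements of (A/Z)_{n+} are the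
   classes of elements of A /\ U_{n+}, etc., and a class vanishes iff its
   representative lies in Z. *)
Definition quot_transitive (A Z : U -> Prop) (m n : int) : Prop :=
  (forall x, A x -> Ugeq n x ->
     (forall y, A y -> Uleq (-1) y -> Z (br y x)) -> Z x) /\
  (forall x, A x -> Uleq m x ->
     (forall y, A y -> Ugeq 1 y -> Z (br y x)) -> Z x).
End Graded.

(* (U, Ug, br) together with the identifications i0 : g ~ U_0 and
   i1 : V ~ U_1 is the Lie superalgebra U of the paper:
   U_0 = g, U_1 = V[-1], U_{-p+1} = Hom(U_1, U_{-p+2}) (p >= 2) via
   x |-> x(u) = [x,u], brackets on U_{1-} as prescribed, and U_+ free
   on U_1. *)
Definition is_U (g : lmodType K) (bg : g -> g -> g) (V : lmodType K)
    (act : g -> V -> V) (U : lmodType K) (Ug : int -> U -> Prop)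
    (br : U -> U -> U) (i0 : g -> U) (i1 : V -> U) : Prop :=
  [/\ graded_lie_super Ug br,
      [/\ is_lin i0, injective i0, (forall x, Ug 0 x <-> exists a, x = i0 a)
        & forall a b, br (i0 a) (i0 b) = i0 (bg a b)],
      [/\ is_lin i1, injective i1, (forall x, Ug 1 x <-> exists v, x = i1 v)
        & forall a v, br (i0 a) (i1 v) = i1 (act a v)],
      (* U_k = Hom(U_1, U_{k+1}) for k <= -1, via x |-> [x, -] *)
      (forall k : int, k <= -1 ->
         (forall x, Ug k x -> (forall v, br x (i1 v) = 0) -> x = 0) /\
         (forall f : V -> U, is_lin f -> (forall v, Ug (k + 1) (f v)) ->
            exists x, Ug k x /\ forall v, br x (i1 v) = f v))
    & (* U_+ is free on U_1: generated by U_1, with the universal property *)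
      (forall x, Ugeq Ug 1 x -> gen_subalg Ug br (fun y => exists v, y = i1 v) x) /\
      (forall (M : lmodType K) (Mg : int -> M -> Prop) (mbr : M -> M -> M),
         graded_lie_super Mg mbr ->
         forall f : V -> M, is_lin f -> (forall v, Mg 1 (f v)) ->
         exists phi : U -> M,
           [/\ is_lin phi, (forall v, phi (i1 v) = f v),
               (forall k x, 1 <= k -> Ug k x -> Mg k (phi x)) &
               forall x y, Ugeq Ug 1 x -> Ugeq Ug 1 y ->
                 phi (br x y) = mbr (phi x) (phi y)])].

(* Everything is expressed inside U: S is a subset of U, and the ideals
   of T = S / KK and of L = T / J are represented by their preimages in S. *)
Definition L_transitive (g : lmodType K) (bg : g -> g -> g) (V : lmodType K)
    (act : g -> V -> V) (Th : V -> g) (m n : int) : Prop :=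
  forall (U : lmodType K) (Ug : int -> U -> Prop) (br : U -> U -> U)
         (i0 : g -> U) (i1 : V -> U),
  is_U bg act Ug br i0 i1 ->
  (* Theta regarded as an element of U_{-1} *)
  forall theta : U, Ug (-1) theta -> (forall v, br theta (i1 v) = i0 (Th v)) ->
  forall sigma : U -> V,
  (forall (a : K) x y, Ug 2 x -> Ug 2 y -> sigma (a *: x + y) = a *: sigma x + sigma y) ->
  (forall u v, sigma (br (i1 u) (i1 v)) = 2%:R^-1 *: (act (Th u) v + act (Th v) u)) ->
  let gmod (W : U -> Prop) := forall a y, W y -> W (br (i0 a) y) in
  let RTh x := forall P, is_subspace P -> P theta -> gmod P -> P x in
  let S := gen_subalg Ug br (fun y => [\/ RTh y, exists a, y = i0 a | exists v, y = i1 v]) in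
  let KK := sum_of_family (fun W => [/\ is_subspace W, gmod W &
               forall y, W y -> Ug 2 y /\ sigma y = 0]) in
  let sK := gen_ideal Ug br S KK in
  (* preimage in S of J = sum of all ideals of T = S/sK contained in T_{3+} *)
  let J := sum_of_family (fun I => [/\ is_ideal_of Ug br S I,
               (forall z, sK z -> I z) &
               forall z, I z -> exists a b, [/\ S a, Ugeq Ug 3 a, sK b & z = a + b]]) in
  quot_transitive Ug br S J m n.

End LieLeibniz.

(* Main.v *)
Require Import Defs.
From mathcomp Require Import all_boot all_order all_algebra reals complex zify.
From Stdlib Require Import ClassicalEpsilon.
Set Implicit Arguments. Unset Strict Implicit. Unset Printing Implicit Defensive.
Import Order.TTheory GRing.Theory Num.Theory.
Local Open Scope ring_scope.
Section Lin.
Variable K : fieldType.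
Section L1.
Variables (A B : lmodType K) (f : A -> B).
Hypothesis hf : is_lin f.
Lemma lin0 : f 0 = 0.
Proof. have := hf 1 0 0; rewrite !scale1r addr0 => h.
by apply: (@addrI _ (f 0)); rewrite addr0 -h. Qed.
Lemma linD x y : f (x + y) = f x + f y.
Proof. by have := hf 1 x y; rewrite !scale1r. Qed.
Lemma linZ a x : f (a *: x) = a *: f x.
Proof. by have := hf a x 0; rewrite !addr0 lin0 addr0. Qed.
Lemma linN x : f (- x) = - f x.
Proof. by rewrite -scaleN1r linZ scaleN1r. Qed.
Lemma linB x y : f (x - y) = f x - f y.
Proof. by rewrite linD linN. Qed.
Lemma lin_sum (I : Type) (r : seq I) (P : pred I) (F : I -> A) :
  f (\sum_(i <- r | P i) F i) = \sum_(i <- r | P i) f (F i).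
Proof. exact: (big_morph f linD lin0). Qed.
End L1.

Section B1.
Variables (A B C : lmodType K) (f : A -> B -> C).
Hypothesis hb : is_bilin f.
Lemma bil_l y : is_lin (f^~ y).
Proof. by move=> a x x'; apply: hb.1. Qed.
Lemma bil_r x : is_lin (f x).
Proof. by move=> a y y'; apply: hb.2. Qed.
End B1.

Section S1.
Variables (A : lmodType K) (P : A -> Prop).
Hypothesis hP : is_subspace P.
Lemma sub0 : P 0. Proof. exact: hP.1. Qed.
Lemma subD x y : P x -> P y -> P (x + y).
Proof. by move=> px py; have := hP.2 1 x y px py; rewrite scale1r. Qed.
Lemma subZ a x : P x -> P (a *: x).
Proof. by move=> px; have := hP.2 a x 0 px sub0; rewrite addr0. Qed.
Lemma subN x : P x -> P (- x).
Proof. by move=> px; rewrite -scaleN1r; apply: subZ. Qed.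
Lemma subB x y : P x -> P y -> P (x - y).
Proof. by move=> px py; apply: subD => //; apply: subN. Qed.
Lemma sub_sum (I : Type) (r : seq I) (Q : pred I) (F : I -> A) :
  (forall i, Q i -> P (F i)) -> P (\sum_(i <- r | Q i) F i).
Proof. by move=> h; apply: big_ind => //; [apply: sub0 | apply: subD]. Qed.
Lemma sub_sum_seq (I : eqType) (r : seq I) (Q : pred I) (F : I -> A) :
  (forall i, i \in r -> Q i -> P (F i)) -> P (\sum_(i <- r | Q i) F i).
Proof. move=> h; rewrite big_seq_cond; apply: sub_sum => i /andP[]; exact: h. Qed.
End S1.
End Lin.

Lemma sum_if1 (A : zmodType) (ds : seq int) m (F : int -> A) :
  uniq ds -> \sum_(k <- ds) (if k == m then F k else 0) = if m \in ds then F m else 0.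
Proof.
elim: ds => [|d ds IH] /=; first by rewrite big_nil.
move=> /andP[dn ud]; rewrite big_cons IH // in_cons.
case: eqP => [<-|ne]; last by rewrite add0r eq_sym; case: eqP.
by rewrite eqxx /= (negbTE dn) addr0.
Qed.
Section Grad.
Variables (K : fieldType) (U : lmodType K) (Ug : int -> U -> Prop) (br : U -> U -> U).
Hypothesis H : graded_lie_super Ug br.

Let Usub k : is_subspace (Ug k) := gls_sub H k.

Definition dec (x : U) : seq (int * U) :=
  proj1_sig (constructive_indefinite_description _ (gls_span H x)).

Lemma dec_hom x p : p \in dec x -> Ug p.1 p.2.
Proof. exact: (proj1 (proj2_sig (constructive_indefinite_description _ (gls_span H x)))). Qed.
Lemma dec_sum x : x = \sum_(p <- dec x) p.2.
Proof. exact: (proj2 (proj2_sig (constructive_indefinite_description _ (gls_span H x)))). Qed.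

Definition pr k x := \sum_(p <- dec x | p.1 == k) p.2.
Definition supp x := undup [seq p.1 | p <- dec x].

Lemma regroup (t : seq (int * U)) ds : uniq ds -> (forall p, p \in t -> p.1 \in ds) ->
  \sum_(p <- t) p.2 = \sum_(k <- ds) \sum_(p <- t | p.1 == k) p.2.
Proof.
move=> ud ht.
under [RHS]eq_bigr => k _ do rewrite big_mkcond.
rewrite exchange_big /=; apply: eq_big_seq => p pt.
rewrite (eq_bigr (fun k => if k == p.1 then p.2 else 0)); last first.
  by move=> k _; rewrite eq_sym.
by rewrite (@sum_if1 _ ds p.1 (fun _ => p.2)) // ht.
Qed.

Lemma sum_none (t : seq (int * U)) k : (forall p, p \in t -> p.1 != k) ->
  \sum_(p <- t | p.1 == k) p.2 = 0.
Proof.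
move=> h; rewrite big_seq_cond big1 // => p /andP[pt pk].
by move: (h p pt); rewrite pk.
Qed.

Lemma pr_uniq (t : seq (int * U)) x : (forall p, p \in t -> Ug p.1 p.2) ->
  x = \sum_(p <- t) p.2 -> forall k, pr k x = \sum_(p <- t | p.1 == k) p.2.
Proof.
move=> ht ex k; rewrite /pr.
have hs := @dec_hom x; have es := dec_sum x.
set s := dec x in hs es *.
pose ds := undup [seq p.1 | p <- s ++ t].
pose f k := \sum_(p <- s | p.1 == k) p.2 - \sum_(p <- t | p.1 == k) p.2.
have ud : uniq ds := undup_uniq _.
have ins p : p \in s ++ t -> p.1 \in ds.
  by move=> pin; rewrite mem_undup; apply/mapP; exists p.
have fk k' : Ug k' (f k').
  apply: subB; first exact: Usub.
    by apply: sub_sum_seq; first exact: Usub; move=> p ps /eqP <-; exact: hs.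
  by apply: sub_sum_seq; first exact: Usub; move=> p ps /eqP <-; exact: ht.
have sum0 : \sum_(k <- ds) f k = 0.
  rewrite sumrB -!regroup //; first by rewrite -es -ex subrr.
    by move=> p pt; apply: ins; rewrite mem_cat pt orbT.
  by move=> p pt; apply: ins; rewrite mem_cat pt.
case kd : (k \in ds).
  by apply/eqP; rewrite -subr_eq0; apply/eqP; apply: (gls_indep H ud (fun k _ => fk k) sum0).
rewrite !sum_none // => p pin; apply/eqP => pk; move: kd; rewrite -pk ins //.
  by rewrite mem_cat pin orbT.
by rewrite mem_cat pin.
Qed.

Lemma pr_hom k x : Ug k x -> forall j, pr j x = if j == k then x else 0.
Proof.
move=> hx j; rewrite (@pr_uniq [:: (k, x)] x) ?big_cons ?big_nil /=.
- by rewrite eq_sym; case: eqP; rewrite ?addr0.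
- by move=> p; rewrite inE => /eqP ->.
- by rewrite addr0.
Qed.

Lemma pr_id k x : Ug k x -> pr k x = x.
Proof. by move=> hx; rewrite (pr_hom hx) eqxx. Qed.
Lemma pr_ne k j x : Ug k x -> j != k -> pr j x = 0.
Proof. by move=> hx jk; rewrite (pr_hom hx) (negbTE jk). Qed.
Lemma pr_Ug k x : Ug k (pr k x).
Proof.
apply: sub_sum_seq; first exact: Usub.
move=> p ps /eqP <-; exact (dec_hom ps).
Qed.
Lemma pr_pr j k x : pr j (pr k x) = if j == k then pr k x else 0.
Proof. exact: (pr_hom (pr_Ug k x)). Qed.

Lemma pr_lin k : is_lin (pr k).
Proof.
move=> a x y.
rewrite (@pr_uniq ([seq (p.1, a *: p.2) | p <- dec x] ++ dec y) (a *: x + y)).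
- by rewrite big_cat big_map /= scaler_sumr.
- move=> p; rewrite mem_cat => /orP[/mapP[q qin ->]|]; last by move=> pin; exact (dec_hom pin).
  by apply: subZ; [exact: Usub | exact (dec_hom qin)].
- by rewrite big_cat big_map /= -scaler_sumr -!dec_sum.
Qed.

Lemma supp_uniq x : uniq (supp x). Proof. exact: undup_uniq. Qed.

Lemma supp_sum x : x = \sum_(k <- supp x) pr k x.
Proof.
rewrite {1}(dec_sum x) (@regroup (dec x) (supp x) (supp_uniq x)) //.
by move=> p pin; rewrite mem_undup; apply: map_f.
Qed.

Lemma pr_supp k x : k \notin supp x -> pr k x = 0.
Proof.
move=> kn; rewrite /pr sum_none // => p pin; apply/eqP => pk; move: kn.
by rewrite -pk mem_undup map_f.
Qed.

Lemma subeq_pr (d k j : int) : (d + j == k) = (j == k - d).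
Proof. by apply/eqP/eqP => [<-|->]; rewrite ?(addrC d j) ?addrK // addrC subrK. Qed.

Lemma pr_brl d y x k : Ug d y -> pr k (br y x) = br y (pr (k - d) x).
Proof.
move=> hy.
have e : br y x = \sum_(j <- supp x) br y (pr j x).
  by rewrite {1}(supp_sum x) (lin_sum (bil_r (gls_bilin H) y)).
rewrite (@pr_uniq [seq (d + j, br y (pr j x)) | j <- supp x] (br y x)).
- rewrite big_map /= (eq_bigl (fun j => j == k - d)); last by move=> j; rewrite subeq_pr.
  rewrite big_mkcond /= (@sum_if1 _ _ _ (fun j => br y (pr j x))) ?supp_uniq //.
  case: ifP => // /negbT kn; rewrite pr_supp //.
  by rewrite (lin0 (bil_r (gls_bilin H) y)).
- by move=> p /mapP[j jin ->] /=; apply: (gls_deg H hy (pr_Ug j x)).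
- by rewrite big_map.
Qed.

Lemma pr_brr d y x k : Ug d y -> pr k (br x y) = br (pr (k - d) x) y.
Proof.
move=> hy.
have e : br x y = \sum_(j <- supp x) br (pr j x) y.
  by rewrite {1}(supp_sum x) (lin_sum (bil_l (gls_bilin H) y)).
rewrite (@pr_uniq [seq (j + d, br (pr j x) y) | j <- supp x] (br x y)).
- rewrite big_map /= (eq_bigl (fun j => j == k - d)); last by move=> j; rewrite addrC subeq_pr.
  rewrite big_mkcond /= (@sum_if1 _ _ _ (fun j => br (pr j x) y)) ?supp_uniq //.
  case: ifP => // /negbT kn; rewrite pr_supp //.
  by rewrite (lin0 (bil_l (gls_bilin H) y)).
- by move=> p /mapP[j jin ->] /=; apply: (gls_deg H (pr_Ug j x) hy).
- by rewrite big_map.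
Qed.

Lemma br_decomp y z :
  br y z = \sum_(i <- supp y) \sum_(j <- supp z) br (pr i y) (pr j z).
Proof.
rewrite {1}(supp_sum y) (lin_sum (bil_l (gls_bilin H) z)); apply: eq_bigr => i _.
by rewrite {1}(supp_sum z) (lin_sum (bil_r (gls_bilin H) _)).
Qed.

Definition pgraded (P : U -> Prop) := forall k x, P x -> P (pr k x).

Lemma pgraded_graded P : is_subspace P -> pgraded P -> is_graded Ug P.
Proof.
move=> sP gP x px; exists [seq (k, pr k x) | k <- supp x]; split.
  by move=> p /mapP[k _ ->] /=; split; [exact: pr_Ug | exact: gP].
by rewrite big_map /= -supp_sum.
Qed.

Lemma graded_pgraded P : is_subspace P -> is_graded Ug P -> pgraded P.
Proof.
move=> sP gP k x /gP[s [hs ->]].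
rewrite (@pr_uniq s) //; last by move=> p /hs[].
by apply: sub_sum_seq => // p ps _; case: (hs p ps).
Qed.

Lemma Ugeq_pr n x : Ugeq Ug n x -> forall k, k < n -> pr k x = 0.
Proof.
move=> [t [ht ->]] k kn; rewrite (@pr_uniq t) //; last by move=> p /ht[].
apply: sum_none => p /ht[np _]; apply/eqP => pk; move: kn; rewrite -pk.
by rewrite ltNge np.
Qed.

Lemma pr_Ugeq n x : (forall k, k < n -> pr k x = 0) -> Ugeq Ug n x.
Proof.
move=> h; exists [seq (k, pr k x) | k <- [seq k <- supp x | n <= k]]; split.
  by move=> p /mapP[k]; rewrite mem_filter => /andP[nk _] -> /=; split => //; exact: pr_Ug.
rewrite big_map big_filter /= {1}(supp_sum x) (bigID (fun k => n <= k)) /=.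
by rewrite [X in _ + X]big1 ?addr0 // => k; rewrite -ltNge => /h.
Qed.

Lemma Ugeq_hom n k x : Ug k x -> n <= k -> Ugeq Ug n x.
Proof.
move=> hx nk; exists [:: (k, x)]; split; last by rewrite big_seq1.
by move=> p; rewrite inE => /eqP -> /=.
Qed.

Lemma Uleq_pr m x : Uleq Ug m x -> forall k, m < k -> pr k x = 0.
Proof.
move=> [t [ht ->]] k kn; rewrite (@pr_uniq t) //; last by move=> p /ht[].
apply: sum_none => p /ht[np _]; apply/eqP => pk; move: kn; rewrite -pk.
by rewrite ltNge np.
Qed.

Lemma Uleq_hom m k x : Ug k x -> k <= m -> Uleq Ug m x.
Proof.
move=> hx nk; exists [:: (k, x)]; split; last by rewrite big_seq1.
by move=> p; rewrite inE => /eqP -> /=.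
Qed.

End Grad.
Section Main.
Variable K : fieldType.
Hypothesis two : (2%:R : K) != 0.
Variables (g : lmodType K) (bg : g -> g -> g) (V : lmodType K) (act : g -> V -> V) (Th : V -> g).
Variables (U : lmodType K) (Ug : int -> U -> Prop) (br : U -> U -> U) (i0 : g -> U) (i1 : V -> U).
Hypothesis hU : is_U bg act Ug br i0 i1.
Variable theta : U.
Hypothesis th_deg : Ug (-1) theta.
Hypothesis th_v : forall v, br theta (i1 v) = i0 (Th v).
Variable sigma : U -> V.
Hypothesis sig_lin : forall (a : K) x y, Ug 2 x -> Ug 2 y -> sigma (a *: x + y) = a *: sigma x + sigma y.
Hypothesis sig_br : forall u v, sigma (br (i1 u) (i1 v)) = 2%:R^-1 *: (act (Th u) v + act (Th v) u).

Let HG : graded_lie_super Ug br. Proof. by case: hU. Qed.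
Let i0l : is_lin i0. Proof. by case: hU => _ []. Qed.
Let i0U x : Ug 0 x <-> exists a, x = i0 a. Proof. by case: hU => _ []. Qed.
Let i0b a b : br (i0 a) (i0 b) = i0 (bg a b). Proof. by case: hU => _ []. Qed.
Let i1l : is_lin i1. Proof. by case: hU => _ _ []. Qed.
Let i1i : injective i1. Proof. by case: hU => _ _ []. Qed.
Let i1U x : Ug 1 x <-> exists v, x = i1 v. Proof. by case: hU => _ _ []. Qed.
Let i1b a v : br (i0 a) (i1 v) = i1 (act a v). Proof. by case: hU => _ _ []. Qed.
Let Hneg (k : int) : k <= -1 -> forall x, Ug k x -> (forall v, br x (i1 v) = 0) -> x = 0.
Proof. move=> kk; case: hU => _ _ _ hn _; exact: (hn k kk).1. Qed.
Let Hgen x : Ugeq Ug 1 x -> gen_subalg Ug br (fun y => exists v, y = i1 v) x.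
Proof. by case: hU => _ _ _ _ [h _]; apply: h. Qed.

Local Notation pr := (pr HG).
Local Notation supp := (supp HG).
Local Notation pgraded := (pgraded HG).

Let Usub k : is_subspace (Ug k) := gls_sub HG k.
Let brl y : is_lin (br^~ y) := bil_l (gls_bilin HG) y.
Let brr x : is_lin (br x) := bil_r (gls_bilin HG) x.
Lemma br0l y : br 0 y = 0. Proof. exact: (lin0 (brl y)). Qed.
Lemma br0r x : br x 0 = 0. Proof. exact: (lin0 (brr x)). Qed.
Lemma i0Ug a : Ug 0 (i0 a). Proof. by apply/i0U; exists a. Qed.
Lemma i1Ug v : Ug 1 (i1 v). Proof. by apply/i1U; exists v. Qed.
Lemma pr0 k : pr k 0 = 0. Proof. exact: (lin0 (pr_lin HG k)). Qed.

Lemma jac i j x y z : Ug i x -> Ug j y ->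
  br (br x y) z = br x (br y z) - psign K i j *: br y (br x z).
Proof. by move=> hx hy; rewrite (gls_jacobi HG _ hx hy) addrK. Qed.

Lemma pr_br_sum k y z :
  pr k (br y z) = \sum_(i <- supp y) br (pr i y) (pr (k - i) z).
Proof.
rewrite {1}(supp_sum HG y) (lin_sum (brl z)) (lin_sum (pr_lin HG k)).
by apply: eq_bigr => i _; rewrite (pr_brl HG _ _ (pr_Ug HG i y)).
Qed.

Lemma subalg_of (P : U -> Prop) : is_subspace P -> pgraded P ->
  (forall i j y z, Ug i y -> Ug j z -> P y -> P z -> P (br y z)) ->
  is_subalgebra Ug br P.
Proof.
move=> sP gP hb; split => //; first exact: (pgraded_graded sP gP).
move=> y z py pz; rewrite (br_decomp HG); apply: sub_sum => // i _.
apply: sub_sum => // j _; exact: (hb i j _ _ (pr_Ug HG i y) (pr_Ug HG j z) (gP _ _ py) (gP _ _ pz)).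
Qed.

Lemma subalg_pg (P : U -> Prop) : is_subalgebra Ug br P -> pgraded P.
Proof. by case=> sP gP _; apply: (graded_pgraded HG sP gP). Qed.

Lemma ideal_of (A P : U -> Prop) : is_subspace A -> pgraded A ->
  is_subspace P -> pgraded P -> (forall x, P x -> A x) ->
  (forall d y z, A y -> Ug d y -> P z -> P (br y z)) -> is_ideal_of Ug br A P.
Proof.
move=> sA gA sP gP PA hb; split => //; first exact: (pgraded_graded sP gP).
move=> y z ay pz; split.
  rewrite {1}(supp_sum HG y) (lin_sum (brl z)); apply: sub_sum => // i _.
  exact: (hb i _ _ (gA _ _ ay) (pr_Ug HG i y) pz).
rewrite (br_decomp HG); apply: sub_sum => // i _; apply: sub_sum => // j _.
rewrite (gls_anti HG (pr_Ug HG i z) (pr_Ug HG j y)); apply: subN => //; apply: subZ => //.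
exact: (hb j _ _ (gA _ _ ay) (pr_Ug HG j y) (gP _ _ pz)).
Qed.

Definition gmod (W : U -> Prop) := forall a y, W y -> W (br (i0 a) y).
Definition RTh x := forall P, is_subspace P -> P theta -> gmod P -> P x.

Lemma RTh_theta : RTh theta. Proof. by move=> P. Qed.
Lemma RTh_sub : is_subspace RTh.
Proof.
split; first by move=> P sP; case: sP.
by move=> a x y rx ry P sP pt gP; case: (sP) => _ h; apply: h; [exact: rx | exact: ry].
Qed.
Lemma RTh_gmod : gmod RTh.
Proof. by move=> a y ry P sP pt gP; exact: (gP a y (ry P sP pt gP)). Qed.
Lemma RTh_deg x : RTh x -> Ug (-1) x.
Proof.
move=> rx; apply: rx => // a y hy.
by have := gls_deg HG (i0Ug a) hy; rewrite add0r.
Qed.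

Definition Bsp w := exists s : seq (V * V), w = \sum_(p <- s) br (i1 p.1) (i1 p.2).
Lemma Bsp0 : Bsp 0. Proof. by exists [::]; rewrite big_nil. Qed.
Lemma BspD x y : Bsp x -> Bsp y -> Bsp (x + y).
Proof. by move=> [s ->] [t ->]; exists (s ++ t); rewrite big_cat. Qed.
Lemma BspZ a x : Bsp x -> Bsp (a *: x).
Proof.
move=> [s ->]; exists [seq (a *: p.1, p.2) | p <- s].
rewrite big_map scaler_sumr; apply: eq_bigr => p _ /=.
by rewrite (linZ i1l) (linZ (brl _)).
Qed.
Lemma Bsp_sub : is_subspace Bsp.
Proof. split; first exact: Bsp0. by move=> a x y bx by_; apply: BspD => //; apply: BspZ. Qed.
Lemma Bsp1 u v : Bsp (br (i1 u) (i1 v)).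
Proof. by exists [:: (u, v)]; rewrite big_seq1. Qed.

Lemma Ug2_br u v : Ug 2 (br (i1 u) (i1 v)).
Proof. exact: (gls_deg HG (i1Ug u) (i1Ug v)). Qed.

Lemma U2_Bsp w : Ug 2 w -> Bsp w.
Proof.
move=> hw.
pose P2 z := (forall k, k <= 0 -> pr k z = 0) /\ Bsp (pr 2 z).
have sP2 : is_subspace P2.
  split; first by split => [k _|]; rewrite pr0 //; exact: Bsp0.
  move=> a x y [hx bx] [hy by_]; split.
    by move=> k k0; rewrite (pr_lin HG) hx // hy // scaler0 addr0.
  by rewrite (pr_lin HG); apply: BspD => //; apply: BspZ.
have gP2 : pgraded P2.
  move=> j z [hz bz]; split.
    move=> k k0; rewrite (pr_pr HG); case: eqP => // <-; exact: hz.
  by rewrite (pr_pr HG); case: eqP => [<-|]; [exact: bz | move=> _; exact: Bsp0].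
have aP2 : is_subalgebra Ug br P2.
  apply: subalg_of => // i j y z hy hz [py by_] [pz bz]; split.
    move=> k k0; rewrite pr_br_sum big1 // => i' _.
    case: (lerP i' 0) => hi; first by rewrite py // br0l.
    by rewrite pz ?br0r //; lia.
  rewrite pr_br_sum; apply: sub_sum; first exact: Bsp_sub.
  move=> i' _; case: (lerP i' 0) => hi; first by rewrite py // br0l; exact: Bsp0.
  case: (lerP 2 i') => hi2; first by rewrite pz ?br0r; [exact: Bsp0 | lia].
  have -> : i' = 1 by lia.
  have [u ->] := proj1 (i1U _) (pr_Ug HG 1 y).
  have [v ->] := proj1 (i1U _) (pr_Ug HG (2 - 1) z).
  exact: Bsp1.
have := Hgen (Ugeq_hom hw (isT : (1 <= 2 :> int))) aP2.
case=> [y [v ->]|_]; last by rewrite (pr_id HG hw).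
split; last by rewrite (pr_ne HG (i1Ug v)) //; exact: Bsp0.
by move=> k k0; rewrite (pr_ne HG (i1Ug v)) //; apply/eqP => k1; rewrite k1 in k0.
Qed.

Lemma theta_br u v : br theta (br (i1 u) (i1 v)) = i1 (act (Th u) v + act (Th v) u).
Proof.
rewrite (gls_jacobi HG _ th_deg (i1Ug u)) !th_v i1b.
rewrite (gls_anti HG (i1Ug u) (i0Ug (Th v))) i1b.
rewrite (_ : psign K (-1) 1 = -1) // (_ : psign K 1 0 = 1) // scale1r scaleN1r opprK.
by rewrite (linD i1l).
Qed.

Lemma thetaU2 w : Ug 2 w -> br theta w = i1 (2%:R *: sigma w).
Proof.
move=> /U2_Bsp [s ->].
pose X (p : V * V) := act (Th p.1) p.2 + act (Th p.2) p.1.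
have hsum : forall s : seq (V * V), Ug 2 (\sum_(p <- s) br (i1 p.1) (i1 p.2)) /\
    sigma (\sum_(p <- s) br (i1 p.1) (i1 p.2)) = \sum_(p <- s) 2%:R^-1 *: X p.
  elim=> [|p s' [h1 h2]]; rewrite ?big_nil ?big_cons.
    split; first exact: sub0.
    have := sig_lin 1 (sub0 (Usub 2)) (sub0 (Usub 2)); rewrite !scale1r addr0 => h.
    by apply: (@addrI _ (sigma 0)); rewrite addr0 -h.
  split; first by apply: subD => //; exact: Ug2_br.
  by have := sig_lin 1 (Ug2_br p.1 p.2) h1; rewrite !scale1r => ->; rewrite h2 sig_br.
rewrite (proj2 (hsum s)) (lin_sum (brr theta)) -scaler_sumr scalerA mulfV // scale1r.
by rewrite (lin_sum i1l); apply: eq_bigr => p _; rewrite theta_br.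
Qed.

Definition Kfam (W : U -> Prop) := [/\ is_subspace W, gmod W &
               forall y, W y -> Ug 2 y /\ sigma y = 0].
Definition KK := sum_of_family Kfam.

Lemma KK_deg k : KK k -> Ug 2 k.
Proof.
move=> [s [hs ->]]; apply: sub_sum_seq => // y ys _.
by have [W [[_ _ h] wy]] := hs y ys; case: (h y wy).
Qed.

Lemma KK_gmod a k : KK k -> KK (br (i0 a) k).
Proof.
move=> [s [hs ->]]; exists [seq br (i0 a) y | y <- s]; split.
  move=> y' /mapP[y ys ->]; have [W [[sW gW h] wy]] := hs y ys.
  by exists W; split => //; apply: gW.
by rewrite big_map (lin_sum (brr _)).
Qed.

Lemma KK_theta k : KK k -> br theta k = 0.
Proof.
move=> [s [hs ->]]; rewrite (lin_sum (brr _)) big_seq big1 // => y ys.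
have [W [[_ _ h] wy]] := hs y ys; have [h2 h0] := h y wy.
by rewrite thetaU2 // h0 scaler0 (lin0 i1l).
Qed.

Lemma RTh_ann x k : RTh x -> KK k -> br x k = 0.
Proof.
move=> rx; move: k; pose P x := Ug (-1) x /\ forall k, KK k -> br x k = 0.
suff : P x by case.
apply: rx.
- split; first by split; [exact: sub0 | move=> k _; exact: br0l].
  move=> a y z [hy py] [hz pz]; split; first by case: (Usub (-1)) => _; apply.
  by move=> k kk; rewrite (linD (brl k)) (linZ (brl k)) py // pz // scaler0 addr0.
- by split => //; exact: KK_theta.
- move=> a y [hy py]; split; first by have := gls_deg HG (i0Ug a) hy; rewrite add0r.
  move=> k kk; rewrite (jac _ (i0Ug a) hy) (py k kk) (py _ (KK_gmod a kk)).
  by rewrite !br0r scaler0 subrr.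
Qed.


Definition gens y := [\/ RTh y, exists a, y = i0 a | exists v, y = i1 v].
Definition S := gen_subalg Ug br gens.

Lemma S_gen y : gens y -> S y. Proof. by move=> gy P _ h; exact: h. Qed.
Lemma S_sub : is_subspace S.
Proof.
split; first by move=> P [[h0 _] _ _] _.
move=> a x y sx sy P hP hg; case: (hP) => [[_ hl] _ _]; apply: hl.
  exact: sx P hP hg.
exact: sy P hP hg.
Qed.
Lemma S_pg : pgraded S.
Proof. move=> k x sx P hP hg; exact: (subalg_pg hP k (sx P hP hg)). Qed.
Lemma S_br x y : S x -> S y -> S (br x y).
Proof.
move=> sx sy P hP hg; case: (hP) => _ _ hb; apply: hb.
  exact: sx P hP hg.
exact: sy P hP hg.
Qed.
Lemma S_i0 a : S (i0 a). Proof. by apply: S_gen; apply: Or32; exists a. Qed.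
Lemma S_i1 v : S (i1 v). Proof. by apply: S_gen; apply: Or33; exists v. Qed.
Lemma S_RTh y : RTh y -> S y. Proof. by move=> r; apply: S_gen; apply: Or31. Qed.
Lemma S_theta : S theta. Proof. exact: S_RTh RTh_theta. Qed.
Lemma U2_S w : Ug 2 w -> S w.
Proof.
move=> /U2_Bsp [s ->]; apply: sub_sum; first exact: S_sub.
by move=> p _; apply: S_br; [exact: S_i1 | exact: S_i1].
Qed.
Lemma KK_S k : KK k -> S k. Proof. by move=> kk; apply: U2_S; apply: KK_deg. Qed.
Lemma S_ideal : is_ideal_of Ug br S S.
Proof.
apply: ideal_of; [exact: S_sub | exact: S_pg | exact: S_sub | exact: S_pg | by [] |].
by move=> d y z sy _ sz; apply: S_br.
Qed.

Inductive Nn : U -> Prop :=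
| NK k : KK k -> Nn k
| N0 : Nn 0
| Nlin a x y : Nn x -> Nn y -> Nn (a *: x + y)
| Na a x : Nn x -> Nn (br (i0 a) x)
| Nv v x : Nn x -> Nn (br (i1 v) x).

Lemma N_sub : is_subspace Nn.
Proof. split; first exact: N0. by move=> a x y hx hy; apply: Nlin. Qed.

Lemma N_low x : Nn x -> forall k, k < 2 -> pr k x = 0.
Proof.
elim=> {x} [k0 kk|| a x y _ hx _ hy| a x _ hx| v x _ hx] k hk.
- by apply: (pr_ne HG (KK_deg kk)); apply/eqP => e; rewrite e in hk.
- exact: pr0.
- by rewrite (pr_lin HG) hx // hy // scaler0 addr0.
- by rewrite (pr_brl HG _ _ (i0Ug a)) hx ?br0r //; lia.
- by rewrite (pr_brl HG _ _ (i1Ug v)) hx ?br0r //; lia.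
Qed.

Lemma N_pg : pgraded Nn.
Proof.
move=> k x nx; elim: nx k => {x} [k0 kk|| a x y _ hx _ hy| a x _ hx| v x _ hx] k.
- by rewrite (pr_hom HG (KK_deg kk)); case: ifP => _; [apply: NK | apply: N0].
- by rewrite pr0; apply: N0.
- by rewrite (pr_lin HG); apply: Nlin.
- by rewrite (pr_brl HG _ _ (i0Ug a)); apply: Na.
- by rewrite (pr_brl HG _ _ (i1Ug v)); apply: Nv.
Qed.

Lemma N_S x : Nn x -> S x.
Proof.
elim=> {x} [k0 kk|| a x y _ hx _ hy| a x _ hx| v x _ hx].
- exact: KK_S.
- exact: (sub0 S_sub).
- by case: S_sub => _; apply.
- by apply: S_br => //; apply: S_i0.
- by apply: S_br => //; apply: S_i1.
Qed.

Lemma N_R x : Nn x -> forall y, RTh y -> Nn (br y x).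
Proof.
elim=> {x} [k0 kk|| a x y _ hx _ hy| a x nx hx| v x nx hx] z rz.
- by rewrite (RTh_ann rz kk); apply: N0.
- by rewrite br0r; apply: N0.
- by rewrite (brr z); apply: Nlin; [exact: hx | exact: hy].
- have hz := RTh_deg rz.
  rewrite (gls_jacobi HG _ hz (i0Ug a)); apply: subD; first exact: N_sub.
    apply: hx; rewrite (gls_anti HG hz (i0Ug a)); apply: (subN RTh_sub).
    by apply: (subZ RTh_sub); apply: RTh_gmod.
  by apply: (subZ N_sub); apply: Na; apply: hx.
- have hz := RTh_deg rz.
  rewrite (gls_jacobi HG _ hz (i1Ug v)); apply: subD; first exact: N_sub.
    have [b ->] := proj1 (i0U _) (gls_deg HG hz (i1Ug v)).
    exact: Na nx.
  by apply: (subZ N_sub); apply: Nv; apply: hx.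
Qed.

Definition PN y := forall n, Nn n -> Nn (br y n).

Lemma S_PN y : S y -> PN y.
Proof.
move=> sy; apply: sy.
- apply: subalg_of.
  + split; first by move=> n _; rewrite br0l; apply: N0.
    by move=> a y1 y2 h1 h2 n nn; rewrite (linD (brl n)) (linZ (brl n)); apply: Nlin; auto.
  + move=> d y1 h1 n nn; rewrite {1}(supp_sum HG n) (lin_sum (brr _)).
    apply: sub_sum; first exact: N_sub.
    move=> e _; have he := pr_Ug HG e n.
    have := pr_brr HG y1 (d + e) he; rewrite addrK => <-.
    by apply: N_pg; apply: h1; apply: N_pg.
  + move=> i j y1 y2 h1 h2 p1 p2 n nn; rewrite (jac _ h1 h2).
    apply: subB; first exact: N_sub.
      by apply: p1; apply: p2.
    by apply: (subZ N_sub); apply: p2; apply: p1.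
- move=> y1 [r|[a ->]|[v ->]] n nn.
  + exact: N_R.
  + exact: Na.
  + exact: Nv.
Qed.

Definition sK := gen_ideal Ug br S KK.

Lemma KK_sK k : KK k -> sK k. Proof. by move=> kk I _ h; apply: h. Qed.
Lemma sK_sub : is_subspace sK.
Proof.
split; first by move=> I [[h0 _] _ _ _] _.
move=> a x y sx sy I hI hK; case: (hI) => [[_ hl] _ _ _]; apply: hl.
  exact: sx I hI hK.
exact: sy I hI hK.
Qed.
Lemma sK_pg : pgraded sK.
Proof.
move=> k z hz I hI hK; case: (hI) => sI gI _ _.
exact: (graded_pgraded HG sI gI k (hz I hI hK)).
Qed.
Lemma sK_S z : sK z -> S z.
Proof. by move=> hz; apply: (hz S S_ideal); apply: KK_S. Qed.
Lemma sK_ideal : is_ideal_of Ug br S sK.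
Proof.
split; [exact: sK_sub | exact: (pgraded_graded sK_sub sK_pg) | exact: sK_S |].
move=> y z sy hz; split=> I hI hK; case: (hI) => _ _ _ hb.
  exact: (hb y z sy (hz I hI hK)).1.
exact: (hb y z sy (hz I hI hK)).2.
Qed.

Lemma sK_N z : sK z -> Nn z.
Proof.
move=> hz; suff : S z /\ Nn z by case.
apply: (hz (fun z => S z /\ Nn z)); last by move=> k kk; split; [exact: KK_S | exact: NK].
apply: ideal_of; [exact: S_sub | exact: S_pg | | | by move=> x [] |].
- split; first by split; [exact: (sub0 S_sub) | exact: N0].
  move=> a x y [sx nx] [sy ny]; split; last exact: Nlin.
  by case: S_sub => _; apply.
- by move=> k x [sx nx]; split; [exact: S_pg | exact: N_pg].
- by move=> d y x sy _ [sx nx]; split; [exact: S_br | exact: S_PN].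
Qed.

Lemma sK_low z k : sK z -> k < 2 -> pr k z = 0.
Proof. by move=> hz; apply: N_low; apply: sK_N. Qed.

Definition Form z := exists a b, [/\ S a, Ugeq Ug 3 a, sK b & z = a + b].
Definition Jfam (I : U -> Prop) := [/\ is_ideal_of Ug br S I,
               (forall z, sK z -> I z) & forall z, I z -> Form z].
Definition J := sum_of_family Jfam.

Lemma Ugeq3_0 : Ugeq Ug 3 0.
Proof. by apply: (@pr_Ugeq _ _ _ _ HG) => k _; apply: pr0. Qed.

Lemma Form_sub : is_subspace Form.
Proof.
split; first by exists 0, 0; split; [exact: (sub0 S_sub) | exact: Ugeq3_0 | exact: (sub0 sK_sub) | rewrite addr0].
move=> c x y [a1 [b1 [s1 g1 k1 ->]]] [a2 [b2 [s2 g2 k2 ->]]].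
exists (c *: a1 + a2), (c *: b1 + b2); split.
- by case: S_sub => _; apply.
- apply: (@pr_Ugeq _ _ _ _ HG) => k hk.
  by rewrite (pr_lin HG) (Ugeq_pr HG g1) // (Ugeq_pr HG g2) // scaler0 addr0.
- by case: sK_sub => _; apply.
- by rewrite scalerDr addrACA.
Qed.

Lemma J_of I z : Jfam I -> I z -> J z.
Proof. by move=> hI iz; exists [:: z]; split; [move=> y; rewrite inE => /eqP ->; exists I | rewrite big_seq1]. Qed.

Lemma J_sub : is_subspace J.
Proof.
split; first by exists [::]; split => //; rewrite big_nil.
move=> a x y [s [hs ->]] [t [ht ->]]; exists ([seq a *: w | w <- s] ++ t); split.
  move=> w; rewrite mem_cat => /orP[/mapP[w' w's ->]|]; last exact: ht.
  have [W [hW hw]] := hs w' w's; exists W; split => //.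
  by case: hW => [[sW _ _ _] _ _]; exact: subZ.
by rewrite big_cat big_map scaler_sumr.
Qed.

Lemma J_pg : pgraded J.
Proof.
move=> k x [s [hs ->]]; exists [seq pr k w | w <- s]; split.
  move=> w /mapP[w' w's ->]; have [W [hW hw]] := hs w' w's; exists W; split => //.
  case: hW => [[sW gW _ _] _ _]; exact: (graded_pgraded HG sW gW k hw).
by rewrite big_map (lin_sum (pr_lin HG k)).
Qed.

Lemma J_S z : J z -> S z.
Proof.
move=> [s [hs ->]]; apply: sub_sum_seq; first exact: S_sub.
by move=> w ws _; have [W [[[_ _ WS _] _ _] hw]] := hs w ws; exact: WS.
Qed.

Lemma J_brl y z : S y -> J z -> J (br y z).
Proof.
move=> sy [s [hs ->]]; exists [seq br y w | w <- s]; split.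
  move=> w /mapP[w' w's ->]; have [W [hW hw]] := hs w' w's; exists W; split => //.
  case: hW => [[_ _ _ hb] _ _]; exact: (hb y w' sy hw).1.
by rewrite big_map (lin_sum (brr y)).
Qed.

Lemma sK_Jfam : Jfam sK.
Proof.
split; [exact: sK_ideal | by [] |].
move=> z hz; exists 0, z; split; [exact: (sub0 S_sub) | exact: Ugeq3_0 | exact: hz | by rewrite add0r].
Qed.

Lemma sK_J z : sK z -> J z. Proof. by move=> hz; apply: (J_of sK_Jfam). Qed.

Lemma J_Form z : J z -> Form z.
Proof.
move=> [s [hs ->]]; apply: sub_sum_seq; first exact: Form_sub.
by move=> w ws _; have [W [[_ _ hF] hw]] := hs w ws; exact: hF.
Qed.

Lemma J_low z k : J z -> k < 2 -> pr k z = 0.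
Proof.
move=> /J_Form [a [b [_ ga kb ->]]] hk.
by rewrite (linD (pr_lin HG k)) (Ugeq_pr HG ga) ?(sK_low kb) ?addr0 //; lia.
Qed.

Lemma part2 x : S x -> Uleq Ug (-2) x ->
  (forall y, S y -> Ugeq Ug 1 y -> J (br y x)) -> J x.
Proof.
move=> sx hx hJ; suff -> : x = 0 by exact: (sub0 J_sub).
rewrite (supp_sum HG x) big1 // => k _.
case: (lerP k (-2)) => hk; last exact: (Uleq_pr HG hx hk).
apply: (Hneg (k := k)); [lia | exact: pr_Ug | move=> v].
have hj := hJ (i1 v) (S_i1 v) (Ugeq_hom (i1Ug v) (lexx _)).
have := J_low (k := k + 1) hj; rewrite (pr_brl HG _ _ (i1Ug v)) addrK => h0.
by rewrite (gls_anti HG (pr_Ug HG k x) (i1Ug v)) h0 //; [rewrite scaler0 oppr0 | lia].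
Qed.

Section Part1.
Variable x : U.
Hypothesis sx : S x.
Hypothesis gx : Ugeq Ug 2 x.
Hypothesis hJ : forall y, S y -> Uleq Ug (-1) y -> J (br y x).

Definition Wset w := [/\ Ug 2 w, S w & forall d y, S y -> Ug d y -> d < 0 -> J (br y w)].

Lemma Wset_sub : is_subspace Wset.
Proof.
split; first by split; [exact: sub0 | exact: (sub0 S_sub) | move=> d y _ _ _; rewrite br0r; exact: (sub0 J_sub)].
move=> a w1 w2 [h1 s1 j1] [h2 s2 j2]; split.
- by case: (Usub 2) => _; apply.
- by case: S_sub => _; apply.
- move=> d y sy hy hd; rewrite (brr y); case: J_sub => _; apply; [exact: (j1 d y sy hy hd) | exact: (j2 d y sy hy hd)].
Qed.

Lemma Wset_gmod : gmod Wset.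
Proof.
move=> a w [h2 s2 j2]; split.
- by have := gls_deg HG (i0Ug a) h2; rewrite add0r.
- by apply: S_br => //; exact: S_i0.
- move=> d y sy hy hd; rewrite (gls_jacobi HG _ hy (i0Ug a)).
  apply: subD; first exact: J_sub.
    apply: (j2 (d + 0) _ _ (gls_deg HG hy (i0Ug a))); last by rewrite addr0.
    by apply: S_br => //; exact: S_i0.
  by apply: (subZ J_sub); apply: J_brl; [exact: S_i0 | exact: (j2 d y sy hy hd)].
Qed.

Lemma Wset_KK w : Wset w -> KK w.
Proof.
move=> hw; exists [:: w]; split; last by rewrite big_seq1.
move=> y; rewrite inE => /eqP ->; exists Wset; split => //; split.
- exact: Wset_sub.
- exact: Wset_gmod.
move=> z [h2 s2 j2]; split => //.
have hj := j2 (-1) theta S_theta th_deg isT.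
rewrite (thetaU2 h2) in hj.
have := J_low (k := 1) hj isT; rewrite (pr_id HG (i1Ug _)).
rewrite -(lin0 i1l) => /i1i /eqP; rewrite scaler_eq0 (negbTE two) /=.
by move/eqP.
Qed.

Inductive Gx : U -> Prop :=
| Gb j : Gx (pr j x)
| Gs y d z : S y -> Ug d y -> 0 <= d -> Gx z -> Gx (br y z).

Lemma Gx_prop z : Gx z -> exists e, [/\ Ug e z, S z & (3 <= e \/ (e = 2 /\ Wset z))].
Proof.
elim=> {z} [j|y d z sy hy hd _ [e [he sz hor]]].
- case: (ltrP j 2) => hj.
    by rewrite (Ugeq_pr HG gx) //; exists 3; split; [exact: sub0 | exact: (sub0 S_sub) | left].
  case: (ltrP j 3) => hj3; last by exists j; split; [exact: pr_Ug | exact: S_pg | left].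
  have j2 : j = 2 by lia.
  subst j; exists 2; split; [exact: pr_Ug | exact: S_pg | right; split => //; split].
  + exact: pr_Ug.
  + exact: S_pg.
  + move=> d y sy hy hd.
    have := pr_brl HG x (2 + d) hy; rewrite addrK => <-.
    by apply: J_pg; apply: hJ => //; apply: (Uleq_hom hy); lia.
- exists (d + e); split; [by have := gls_deg HG hy he | exact: S_br |].
  case: hor => [h3|[e2 wz]]; first by left; lia.
  case: (ltrP 0 d) => hd0; first by left; lia.
  have d0 : d = 0 by lia.
  subst d e; right; split => //.
  have [a ->] := proj1 (i0U _) hy; exact: Wset_gmod.
Qed.

Inductive Iset : U -> Prop :=
| IJ z : J z -> Iset z
| IG z : Gx z -> Iset z
| I0 : Iset 0
| Ilin a z w : Iset z -> Iset w -> Iset (a *: z + w).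

Lemma Iset_sub : is_subspace Iset.
Proof. split; first exact: I0. by move=> a z w hz hw; apply: Ilin. Qed.

Lemma Ipos z : Iset z -> forall y d, S y -> Ug d y -> 0 <= d -> Iset (br y z).
Proof.
elim=> {z} [z jz|z gz||a z w _ hz _ hw] y d sy hy hd.
- by apply: IJ; apply: J_brl.
- by apply: IG; apply: (Gs sy hy hd gz).
- by rewrite br0r; apply: I0.
- by rewrite (brr y); apply: Ilin; [exact: (hz y d sy hy hd) | exact: (hw y d sy hy hd)].
Qed.

Lemma Ineg z : Gx z -> forall y d, S y -> Ug d y -> Iset (br y z).
Proof.
elim=> {z} [j|y1 d1 z1 sy1 hy1 hd1 gz1 IH] y d sy hy.
- case: (lerP 0 d) => hd; first by apply: IG; apply: (Gs sy hy hd (Gb j)).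
  have := pr_brl HG x (j + d) hy; rewrite addrK => <-.
  by apply: IJ; apply: J_pg; apply: hJ => //; apply: (Uleq_hom hy); lia.
- case: (lerP 0 d) => hd; first by apply: IG; apply: (Gs sy hy hd (Gs sy1 hy1 hd1 gz1)).
  rewrite (gls_jacobi HG _ hy hy1); apply: subD; first exact: Iset_sub.
    by apply: (IH _ (d + d1) _ (gls_deg HG hy hy1)); exact: S_br.
  by apply: (subZ Iset_sub); apply: (Ipos (IH y d sy hy) sy1 hy1 hd1).
Qed.

Lemma Ihom z y d : Iset z -> S y -> Ug d y -> Iset (br y z).
Proof.
move=> iz; elim: iz y d => {z} [z jz|z gz||a z w _ hz _ hw] y d sy hy.
- by apply: IJ; apply: J_brl.
- exact: (Ineg gz sy hy).
- by rewrite br0r; apply: I0.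
- by rewrite (brr y); apply: Ilin; [exact: (hz y d) | exact: (hw y d)].
Qed.

Lemma Iset_pg : pgraded Iset.
Proof.
move=> k z iz; elim: iz k => {z} [z jz|z gz||a z w _ hz _ hw] k.
- by apply: IJ; apply: J_pg.
- have [e [he _ _]] := Gx_prop gz.
  by rewrite (pr_hom HG he); case: ifP => _; [apply: IG | apply: I0].
- by rewrite pr0; apply: I0.
- by rewrite (pr_lin HG); apply: Ilin.
Qed.

Lemma Iset_S z : Iset z -> S z.
Proof.
elim=> {z} [z jz|z gz||a z w _ hz _ hw].
- exact: J_S.
- by have [e [_ ? _]] := Gx_prop gz.
- exact: (sub0 S_sub).
- by case: S_sub => _; apply.
Qed.

Lemma Iset_Jfam : Jfam Iset.
Proof.
split.
- apply: ideal_of; [exact: S_sub | exact: S_pg | exact: Iset_sub | exact: Iset_pg | exact: Iset_S |].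
  by move=> d y z sy hy iz; apply: (Ihom iz sy hy).
- by move=> z hz; apply: IJ; apply: sK_J.
- move=> z0 iz; elim: iz => {z0} [z jz|z gz||a z w _ hz _ hw].
  + exact: J_Form.
  + have [e [he sz [h3|[_ wz]]]] := Gx_prop gz.
      exists z, 0; split => //; [exact: (Ugeq_hom he h3) | exact: (sub0 sK_sub) | by rewrite addr0].
    exists 0, z; split; [exact: (sub0 S_sub) | exact: Ugeq3_0 | | by rewrite add0r].
    by apply: KK_sK; apply: Wset_KK.
  + exact: (sub0 Form_sub).
  + by case: Form_sub => _; apply.
Qed.

Lemma part1 : J x.
Proof.
apply: (J_of Iset_Jfam); rewrite (supp_sum HG x); apply: sub_sum; first exact: Iset_sub.
by move=> j _; apply: IG; apply: Gb.
Qed.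
End Part1.

Theorem main_gen : quot_transitive Ug br S J (-2) 2.
Proof.
split; first by move=> x sx gx hJ; exact: (part1 sx gx hJ).
exact: part2.
Qed.

End Main.

Unset Implicit Arguments.
Local Open Scope complex_scope.

Lemma Ltr (K : fieldType) (two : (2%:R : K) != 0) (g : lmodType K) (bg : g -> g -> g)
  (V : lmodType K) (act : g -> V -> V) (Th : V -> g) : L_transitive bg act Th (-2) 2.
Proof.
move=> U Ug br i0 i1 hU theta th1 th2 sigma s1 s2.
exact: (main_gen two hU th1 th2 s1 s2).
Qed.

Theorem proposition4p8 (R : realType) :
  (forall (g : lmodType R) (bg : g -> g -> g) (V : lmodType R)
          (act : g -> V -> V) (Th : V -> g),
     lie_leibniz_triple bg act Th -> L_transitive bg act Th (-2) 2) /\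
  (forall (g : lmodType R[i]) (bg : g -> g -> g) (V : lmodType R[i])
          (act : g -> V -> V) (Th : V -> g),
     lie_leibniz_triple bg act Th -> L_transitive bg act Th (-2) 2).
Proof.
split=> g bg V act Th _; apply: Ltr; by rewrite pnatr_eq0.
Qed.
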